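(* Let $k,t \geq 2$ be integers and $1 \leq r \leq t$. If $z = \eta + iy$ with $\eta > 0$ and $q=e^{-z}$, then \[ |L_k^\times(r,t;q)| \leq \frac{e^{\eta}}{\eta^2}. \]
   Context: $L_k^\times(r,t;q) \coloneqq \sum_{m\ge1,\ k\nmid m,\ m\equiv r \pmod t} \frac{q^m}{1-q^m}$. *)

(* Defs.v *)
From Stdlib Require Import Reals Arith Bool.
From Coquelicot Require Import Coquelicot.
Open Scope R_scope.

Definition Cexp (z : C) : C :=
  (exp (Re z) * cos (Im z), exp (Re z) * sin (Im z)).

Fixpoint Cpow (x : C) (n : nat) : C :=
  match n with O => 1%C | S n' => Cmult x (Cpow x n') end.

Definition Lterm (k r t : nat) (q : C) (m : nat) : C :=
  if andb (andb (1 <=? m)%nat (negb (m mod k =? 0)%nat)) (m mod t =? r mod t)%nat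
  then Cdiv (Cpow q m) (Cminus 1%C (Cpow q m))
  else 0%C.

Definition is_Lkx (k r t : nat) (q : C) (l : C) : Prop :=
  is_series (Lterm k r t q) l.

(* Main.v *)
Require Import Defs.
From Stdlib Require Import Reals Arith Lra Lia.
From Coquelicot Require Import Coquelicot.
Open Scope R_scope.

Lemma Cmod_Cpow (q : C) (m : nat) : Cmod (Defs.Cpow q m) = Cmod q ^ m.
Proof.
  induction m; simpl. apply Cmod_1. rewrite Cmod_mult, IHm. reflexivity.
Qed.

Lemma Cmod_Cexp_opp (eta y : R) : Cmod (Cexp (Copp (eta, y))) = exp (- eta).
Proof.
  unfold Cexp, Cmod; simpl.
  assert (H := sin2_cos2 (- y)). unfold Rsqr in H.
  transitivity (sqrt (exp (- eta) ^ 2)).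
  { f_equal. simpl. transitivity (exp (- eta) * exp (- eta) * (sin (- y) * sin (- y) + cos (- y) * cos (- y))). ring. rewrite H; ring. }
  apply sqrt_pow2. left; apply exp_pos.
Qed.

Lemma norm_sum_le (f : nat -> C) (n : nat) :
  Cmod (sum_n f n) <= sum_n (fun m => Cmod (f m)) n.
Proof.
  induction n.
  - rewrite !sum_O. lra.
  - rewrite !sum_Sn.
    eapply Rle_trans. apply Cmod_triangle.
    change (plus (sum_n (fun m : nat => Cmod (f m)) n) (Cmod (f (S n))))
      with (sum_n (fun m : nat => Cmod (f m)) n + Cmod (f (S n))). lra.
Qed.

Lemma sum_n_le_R (f g : nat -> R) (n : nat) :
  (forall m, f m <= g m) -> sum_n f n <= sum_n g n.
Proof.
  intros H. induction n.
  - rewrite !sum_O. apply H.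
  - rewrite !sum_Sn. change (sum_n f n + f (S n) <= sum_n g n + g (S n)).
    specialize (H (S n)). lra.
Qed.

Theorem lemma3p9 (k t r : nat) (eta y : R) :
  (2 <= k)%nat -> (2 <= t)%nat -> (1 <= r <= t)%nat -> 0 < eta ->
  let q := Cexp (Copp (eta, y)) in
  exists l : C, is_Lkx k r t q l /\ Cmod l <= exp eta / eta ^ 2.
Proof.
  intros Hk Ht Hr He q.
  set (a := exp (- eta)).
  assert (Ha0 : 0 < a) by apply exp_pos.
  assert (Ha1 : a < 1).
  { unfold a. rewrite <- exp_0. apply exp_increasing. lra. }
  assert (Hq : Cmod q = a) by apply Cmod_Cexp_opp.
  set (b := fun m : nat => match m with O => 0 | S _ => a ^ m / (1 - a) end).
  assert (Hb : forall m, Cmod (Lterm k r t q m) <= b m).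
  { intros m. unfold Lterm.
    destruct (andb _ _) eqn:E.
    - destruct m as [|m]. { simpl in E. discriminate. }
      assert (Hp : Cmod (Defs.Cpow q (S m)) = a ^ S m) by (rewrite Cmod_Cpow, Hq; reflexivity).
      set (p := Defs.Cpow q (S m)) in *.
      assert (Hpa : a ^ S m <= a).
      { simpl. assert (a ^ m <= 1).
        { destruct m. simpl; lra. left; apply pow_lt_1_compat. lra. lia. }
        nra. }
      assert (H1 : 1 - Cmod p <= Cmod ((1 - p)%C)).
      { assert (Cmod ((1 - p + p)%C) <= Cmod ((1 - p)%C) + Cmod p)
          by apply Cmod_triangle.
        assert (E1 : (1 - p + p)%C = 1%C).
        field.
        rewrite E1 in H.
        rewrite Cmod_1 in H. lra. }
      assert (Hnz : (1 - p)%C <> 0%C).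
      { intro Z. rewrite Z, Cmod_0 in H1. lra. }
      rewrite Cmod_div by exact Hnz. rewrite Hp. change (b (S m)) with (a ^ S m / (1 - a)).
      unfold Rdiv. apply Rmult_le_compat_l. apply pow_le; lra.
      apply Rinv_le_contravar; lra.
    - rewrite Cmod_0. destruct m; [simpl; lra|]. change (b (S m)) with (a ^ S m / (1 - a)).
      apply Rdiv_le_0_compat. apply pow_le; lra. lra. }
  assert (Hbs : is_series b (a / (1 - a) ^ 2)).
  { assert (Hg : is_series (fun n => a ^ n) (/ (1 - a))).
    { apply is_series_geom. rewrite Rabs_pos_eq; lra. }
    pose proof (is_series_scal (a / (1 - a)) _ _ Hg) as Hs.
    change (scal (a / (1 - a)) (/ (1 - a))) with (a / (1 - a) * / (1 - a)) in Hs.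
    apply is_series_decr_1.
    change (plus (a / (1 - a) ^ 2) (opp (b 0%nat))) with (a / (1 - a) ^ 2 + - 0).
    replace (a / (1 - a) ^ 2 + - 0) with (a / (1 - a) * / (1 - a)) by (field; lra).
    eapply is_series_ext; [|exact Hs].
    intros n. change (b (S n)) with (a ^ S n / (1 - a)).
    change (a / (1 - a) * a ^ n = a ^ S n / (1 - a)).
    simpl. field. lra. }
  assert (Hex : ex_series (Lterm k r t q)).
  { apply (@ex_series_le C_AbsRing C_CompleteNormedModule) with b. intros n. exact (Hb n).
    exists (a / (1 - a) ^ 2). exact Hbs. }
  destruct Hex as [l Hl].
  exists l. split. exact Hl.
  assert (Hle : Rbar_le (Cmod l) (a / (1 - a) ^ 2)).
  { apply is_lim_seq_le with (fun n => Cmod (sum_n (Lterm k r t q) n)) (sum_n b).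
    - intros n. eapply Rle_trans. apply norm_sum_le.
      apply sum_n_le_R. intros m. apply Hb.
    - unfold is_lim_seq. apply filterlim_ext with (fun n => norm (sum_n (Lterm k r t q) n)).
      { intros n. reflexivity. }
      change (Cmod l) with (@norm C_AbsRing C_NormedModule l). eapply filterlim_comp. exact Hl. apply filterlim_norm.
    - exact Hbs. }
  assert (Hfin : a / (1 - a) ^ 2 <= exp eta / eta ^ 2).
  { assert (HE : 1 + eta < exp eta) by (apply exp_ineq1; lra).
    assert (Ha : a = / exp eta) by (unfold a; apply exp_Ropp).
    rewrite Ha.
    assert (HE0 : 0 < exp eta) by apply exp_pos.
    replace (/ exp eta / (1 - / exp eta) ^ 2) with (exp eta / (exp eta - 1) ^ 2)
      by (field; lra).
    unfold Rdiv. apply Rmult_le_compat_l. lra.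
    apply Rinv_le_contravar. apply pow_lt; lra.
    simpl. nra. }
  simpl in Hle. simpl in Hfin. simpl. lra.
Qed.
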